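(* Let $\{a_n,n\ge1\}$ be a sequence of positive real numbers such that $a_n\to\infty$ and $a_n/a_{n-1}\to1$ as $n\to\infty$. Let $S_n=\sum_{i=1}^na_i$ and $S_{2,n}=\sum_{i=1}^na_i^2$. Then $a_n/S_n\to0$ and $S_{2,n}/S_n^2\to0$ as $n\to\infty$. *)

(* Defs.v *)
From Stdlib Require Import Reals.
From Coquelicot Require Import Coquelicot.
Open Scope R_scope.

(* S_n = sum_{i=1}^n a_i  (a is indexed from 1; a 0 is irrelevant) *)
Definition Ssum (a : nat -> R) (n : nat) : R :=
  sum_n_m a 1 n.

Definition S2sum (a : nat -> R) (n : nat) : R :=
  sum_n_m (fun i => (a i) ^ 2) 1 n.

(* Main.v *)
Require Import Defs.
From Stdlib Require Import Reals Lra Lia ZArith.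
From Coquelicot Require Import Coquelicot.
Open Scope R_scope.

Lemma Ssum_S a n : Ssum a (S n) = Ssum a n + a (S n).
Proof. unfold Ssum. rewrite sum_n_Sm; [reflexivity|lia]. Qed.
Lemma S2sum_S a n : S2sum a (S n) = S2sum a n + a (S n) ^ 2.
Proof. unfold S2sum. rewrite sum_n_Sm; [reflexivity|lia]. Qed.
Lemma Ssum_0 a : Ssum a 0 = 0.
Proof. unfold Ssum. rewrite sum_n_m_zero; [reflexivity|lia]. Qed.
Lemma S2sum_0 a : S2sum a 0 = 0.
Proof. unfold S2sum. rewrite sum_n_m_zero; [reflexivity|lia]. Qed.

Lemma nat_above (x : R) : exists k : nat, x < INR k.
Proof.
  destruct (archimed (Rabs x)) as [H _].
  exists (Z.to_nat (up (Rabs x))).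
  rewrite INR_IZR_INZ, Z2Nat.id.
  - pose proof (Rle_abs x); lra.
  - apply le_IZR. pose proof (Rabs_pos x); lra.
Qed.

Lemma Ssum_pos a (hpos : forall n : nat, (1 <= n)%nat -> 0 < a n) n :
  0 <= Ssum a n /\ ((1 <= n)%nat -> a n <= Ssum a n).
Proof.
  induction n as [|n [IH1 IH2]].
  - rewrite Ssum_0. split; [lra| intros; lia].
  - rewrite Ssum_S. assert (0 < a (S n)) by (apply hpos; lia). split; [lra| intros; lra].
Qed.

Lemma S2sum_pos a n : 0 <= S2sum a n.
Proof.
  induction n as [|n IH]. - rewrite S2sum_0; lra.
  - rewrite S2sum_S. pose proof (pow2_ge_0 (a (S n))). lra.
Qed.

Lemma part1 (a : nat -> R)
  (hpos : forall n : nat, (1 <= n)%nat -> 0 < a n)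
  (hratio : is_lim_seq (fun n : nat => a (S n) / a n) 1) :
  is_lim_seq (fun n => Ssum a n / a n) p_infty.
Proof.
  set (c := fun n => Ssum a n / a n).
  set (r := fun n => a n / a (S n)).
  assert (Hr : is_lim_seq r 1).
  { apply is_lim_seq_ext_loc with (u := fun n => / (a (S n) / a n)).
    - exists 1%nat. intros n Hn. unfold r.
      assert (0 < a n) by (apply hpos; lia). assert (0 < a (S n)) by (apply hpos; lia).
      field. lra.
    - replace (Finite 1) with (Rbar_inv 1) by (simpl; rewrite Rinv_1; reflexivity).
      apply is_lim_seq_inv; [exact hratio| ]. intro H; injection H; lra. }
  assert (Hrec : forall n, (1 <= n)%nat -> c (S n) = r n * c n + 1).
  { intros n Hn. unfold c, r. rewrite Ssum_S.
    assert (0 < a n) by (apply hpos; lia). assert (0 < a (S n)) by (apply hpos; lia).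
    field. lra. }
  assert (Hc0 : forall n, 0 <= c n).
  { intro n. unfold c. destruct n as [|n].
    - rewrite Ssum_0. unfold Rdiv. lra.
    - assert (0 < a (S n)) by (apply hpos; lia).
      destruct (Ssum_pos a hpos (S n)). apply Rdiv_le_0_compat; lra. }
  apply is_lim_seq_spec. intro M.
  set (K := Rmax M 1 + 1).
  assert (HK1 : 2 <= K) by (unfold K; pose proof (Rmax_r M 1); lra).
  assert (HKM : M < K) by (unfold K; pose proof (Rmax_l M 1); lra).
  assert (Htpos : 0 < / (2 * K)) by (apply Rinv_0_lt_compat; lra).
  set (t := mkposreal _ Htpos).
  apply is_lim_seq_spec in Hr. destruct (Hr t) as [N0 HN0].
  set (N := Nat.max N0 1).
  assert (HtK : / (2 * K) * K = 1/2) by (field; lra).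
  assert (Hclaim : forall k, Rmin K (c N + INR k / 2) <= c (N + k)%nat).
  { induction k as [|k IH].
    - rewrite Nat.add_0_r. simpl. unfold Rmin. destruct (Rle_dec _ _); lra.
    - replace (N + S k)%nat with (S (N + k)) by lia.
      rewrite Hrec by lia.
      assert (Hrk : 1 - / (2 * K) <= r (N + k)%nat).
      { specialize (HN0 (N + k)%nat ltac:(lia)). simpl in HN0.
        apply Rabs_lt_between in HN0. lra. }
      pose proof (Hc0 (N + k)%nat) as Hc.
      set (x := c (N + k)%nat) in *. set (rr := r (N + k)%nat) in *.
      assert (rr * x >= (1 - / (2*K)) * x) by (apply Rle_ge, Rmult_le_compat_r; lra).
      rewrite S_INR.
      destruct (Rle_dec K x) as [Hx|Hx].
      + assert ((1 - / (2*K)) * x >= (1 - / (2*K)) * K).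
        { apply Rle_ge, Rmult_le_compat_l; [|lra]. assert (/ (2*K) <= 1/2).
          { rewrite <- HtK. pose proof (Rmult_le_compat_l (/(2*K)) 1 K) as HH. lra. }
          lra. }
        assert (Rmin K (c N + (INR k + 1) / 2) <= K) by apply Rmin_l. nra.
      + assert (/ (2*K) * x <= / (2*K) * K) by (apply Rmult_le_compat_l; lra).
        revert IH. unfold Rmin. destruct (Rle_dec _ _); destruct (Rle_dec _ _); intros; nra. }
  destruct (nat_above (2 * K)) as [k0 Hk0].
  exists (N + k0)%nat. intros n Hn.
  replace n with (N + (n - N))%nat by lia.
  specialize (Hclaim (n - N)%nat).
  assert (INR k0 <= INR (n - N)) by (apply le_INR; lia).
  pose proof (Hc0 N).
  revert Hclaim. unfold Rmin. destruct (Rle_dec _ _); intros; lra.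
Qed.

Theorem lemmaA1 (a : nat -> R)
  (hpos : forall n : nat, (1 <= n)%nat -> 0 < a n)
  (hinf : is_lim_seq a p_infty)
  (hratio : is_lim_seq (fun n : nat => a (S n) / a n) 1) :
  is_lim_seq (fun n : nat => a n / Ssum a n) 0 /\
  is_lim_seq (fun n : nat => S2sum a n / (Ssum a n) ^ 2) 0.
Proof.
  assert (H1 : is_lim_seq (fun n : nat => a n / Ssum a n) 0).
  { apply is_lim_seq_ext_loc with (u := fun n => / (Ssum a n / a n)).
    - exists 1%nat. intros n Hn.
      assert (0 < a n) by (apply hpos; lia). destruct (Ssum_pos a hpos n) as [_ H2].
      specialize (H2 Hn). field. lra.
    - replace (Finite 0) with (Rbar_inv p_infty) by reflexivity.
      apply is_lim_seq_inv; [apply part1; assumption| discriminate]. }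
  split; [exact H1|].
  assert (HS : is_lim_seq (Ssum a) p_infty).
  { apply is_lim_seq_le_p_loc with (u := a); [|exact hinf].
    exists 1%nat. intros n Hn. apply (Ssum_pos a hpos n); lia. }
  apply is_lim_seq_spec in H1. apply is_lim_seq_spec in HS.
  apply is_lim_seq_spec. intro eps.
  assert (He2 : 0 < eps / 2) by (pose proof (cond_pos eps); lra).
  destruct (H1 (mkposreal _ He2)) as [N0 HN0'].
  assert (HN0 : forall n, (N0 <= n)%nat -> Rabs (a n / Ssum a n - 0) < eps / 2) by exact HN0'.
  clear HN0'.
  set (N := Nat.max N0 1).
  set (C := S2sum a N).
  assert (Hcl : forall k, S2sum a (N + k)%nat <= C + eps / 2 * Ssum a (N + k)%nat ^ 2).
  { induction k as [|k IH].
    - rewrite Nat.add_0_r. pose proof (Rle_0_sqr (Ssum a N)). unfold Rsqr in *.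
      assert (0 <= eps / 2 * (Ssum a N * Ssum a N)) by (apply Rmult_le_pos; lra).
      unfold C; simpl; lra.
    - replace (N + S k)%nat with (S (N + k)) by lia.
      rewrite S2sum_S.
      specialize (HN0 (S (N + k)) ltac:(lia)).
      destruct (Ssum_pos a hpos (S (N + k))) as [_ Hge].
      specialize (Hge ltac:(lia)).
      assert (0 < a (S (N + k))) by (apply hpos; lia).
      rewrite Rminus_0_r, Rabs_pos_eq in HN0 by (apply Rdiv_le_0_compat; lra).
      apply (proj1 (Rlt_div_l (a (S (N + k))) (eps / 2) (Ssum a (S (N + k))) ltac:(lra))) in HN0.
      destruct (Ssum_pos a hpos (N + k)) as [Hs0 _].
      rewrite Ssum_S in *. set (s := Ssum a (N + k)%nat) in *.
      set (x := a (S (N + k))) in *.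
      assert (x * x <= x * (eps / 2 * (s + x))) by (apply Rmult_le_compat_l; lra).
      assert (0 <= eps / 2 * x * s) by (apply Rmult_le_pos; [apply Rmult_le_pos|]; lra).
      nra. }
  assert (HC0 : 0 <= C) by apply S2sum_pos.
  destruct (HS (Rmax 1 (2 * C / eps + 1))) as [N1 HN1].
  exists (Nat.max N N1). intros n Hn.
  specialize (HN1 n ltac:(lia)).
  pose proof (Rmax_l 1 (2 * C / eps + 1)). pose proof (Rmax_r 1 (2 * C / eps + 1)).
  set (s := Ssum a n) in *.
  assert (Hs2 : s <= s ^ 2) by nra.
  specialize (Hcl (n - N)%nat). replace (N + (n - N))%nat with n in Hcl by lia.
  fold s in Hcl.
  assert (HS2 : 0 <= S2sum a n) by apply S2sum_pos.
  assert (0 < s ^ 2) by lra.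
  rewrite Rminus_0_r, Rabs_pos_eq by (apply Rdiv_le_0_compat; lra).
  apply Rlt_div_l; [lra|].
  pose proof (cond_pos eps).
  assert (2 * C / eps * eps = 2 * C) by (field; lra).
  assert (2 * C / eps < s ^ 2) by lra.
  assert (2 * C / eps * eps < s ^ 2 * eps) by (apply Rmult_lt_compat_r; lra).
  lra.
Qed.
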